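(* For every $\alpha\ge 1$ and $\beta\ge 1$, there exist a finite set $\mathcal{N}$ of $n$ agents, a finite set $\mathcal{M}$ of feasible centers, a positive integer $k$, and a pseudometric $d$ on $\mathcal{N}\cup\mathcal{M}$ such that no clustering is simultaneously in the $\alpha$-core with respect to the centroid loss $\ell_i(C,x)=d(i,x)$ and in the $\beta$-core with respect to the non-centroid loss $\ell_i(C,x)=\max_{j\in C}d(i,j)$.
   Context: Given agents $\mathcal{N}$ ($|\mathcal{N}|=n$), feasible centers $\mathcal{M}$, a positive integer $k$, and loss functions $\ell_i(C,x)\ge0$ defined for $C\subseteq\mathcal{N}$ with $i\in C$ and $x\in\mathcal{M}$: a clustering is $\mathcal{X}=\{(C_1,x_1),\dots,(C_k,x_k)\}$ where $C_1,\dots,C_k$ are pairwise disjoint subsets of $\mathcal{N}$ (some possibly empty) with union $\mathcal{N}$ and $x_t\in\mathcal{M}$; $\ell_i(\mathcal{X})=\ell_i(C_t,x_t)$ for the unique $t$ with $i\in C_t$. For $\alpha\ge1$, $\mathcal{X}$ is in the $\alpha$-core (with respect to the losses $\ell_i$) if there is no $S\subseteq\mathcal{N}$ with $|S|\ge n/k$ and $y\in\mathcal{M}$ such that $\alpha\cdot\ell_i(S,y)<\ell_i(\mathcal{X})$ for all $i\in S$. A pseudometric satisfies $d(x,x)=0$, symmetry and the triangle inequality. *)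

(* Defs.v *)
From HB Require Import structures.
From mathcomp Require Import all_boot all_order all_algebra.
From mathcomp Require Import reals.
Set Implicit Arguments. Unset Strict Implicit. Unset Printing Implicit Defensive.
Import Order.TTheory GRing.Theory Num.Theory.
Local Open Scope ring_scope.

Definition pseudometric (R : realType) (T : Type) (d : T -> T -> R) : Prop :=
  [/\ forall x, d x x = 0,
      forall x y, d x y = d y x &
      forall x y z, d x z <= d x y + d y z].

Record clustering (N M : finType) (k : nat) := Clustering {
  cl_set : 'I_k -> {set N};
  cl_ctr : 'I_k -> M;
  cl_disj : forall s t : 'I_k, s != t -> [disjoint cl_set s & cl_set t];
  cl_cover : forall i : N, exists t : 'I_k, i \in cl_set t
}.

(* Loss function l i C x, meaningful for i \in C. *)
Definition lossfun (R : realType) (N M : finType) := N -> {set N} -> M -> R.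

Definition in_core (R : realType) (N M : finType) (k : nat)
  (alpha : R) (l : lossfun R N M) (X : clustering N M k) : Prop :=
  ~ exists (S : {set N}) (y : M),
      (#|N|%:R / k%:R <= #|S|%:R :> R) /\
      forall i, i \in S -> forall t : 'I_k, i \in cl_set X t ->
        alpha * l i S y < l i (cl_set X t) (cl_ctr X t).

Definition centroid_loss (R : realType) (N M : finType)
  (d : N + M -> N + M -> R) : lossfun R N M :=
  fun i _ x => d (inl i) (inr x).

(* Non-centroid loss: l_i(C,x) = max_{j in C} d(i,j)
   (max with 0 is harmless: d >= 0 and i \in C). *)
Definition noncentroid_loss (R : realType) (N M : finType)
  (d : N + M -> N + M -> R) : lossfun R N M :=
  fun i C _ => \big[Num.max/0]_(j in C) d (inl i) (inl j).

(* Main.v *)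
Require Import Defs.
From HB Require Import structures.
From mathcomp Require Import all_boot all_order all_algebra.
From mathcomp Require Import reals.
From mathcomp Require Import lra.
Import Order.TTheory GRing.Theory Num.Theory.


Definition levtab : seq (seq nat) := [::
[:: 0; 4; 4; 3; 4; 3; 4; 3; 3; 4];
[:: 4; 0; 3; 4; 3; 4; 3; 4; 4; 3];
[:: 4; 3; 0; 4; 1; 4; 1; 4; 4; 0];
[:: 3; 4; 4; 0; 4; 2; 4; 1; 2; 4];
[:: 4; 3; 1; 4; 0; 4; 0; 4; 4; 1];
[:: 3; 4; 4; 2; 4; 0; 4; 2; 0; 4];
[:: 4; 3; 1; 4; 0; 4; 0; 4; 4; 1];
[:: 3; 4; 4; 1; 4; 2; 4; 0; 2; 4];
[:: 3; 4; 4; 2; 4; 0; 4; 2; 0; 4];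
[:: 4; 3; 0; 4; 1; 4; 1; 4; 4; 0]].
Definition lev (p q : nat) : nat := nth 0 (nth [::] levtab p) q.
Fixpoint tuples (n m : nat) : seq (seq nat) :=
  if n is n'.+1 then [seq x :: t | x <- iota 0 m, t <- tuples n' m] else [:: [::]].
Definition ncdev (s : seq nat) : bool :=
  has (fun i => has (fun j => (i != j) &&
     has (fun w => (nth 0 s w == nth 0 s i) && (lev i j < lev i w)) (iota 0 6) &&
     has (fun w => (nth 0 s w == nth 0 s j) && (lev j i < lev j w)) (iota 0 6))
   (iota 0 6)) (iota 0 6).
Definition cdev (s c : seq nat) : bool :=
  has (fun i => has (fun j => (i != j) &&
     has (fun y => (lev i (6 + y) < lev i (6 + nth 0 c (nth 0 s i))) &&
                   (lev j (6 + y) < lev j (6 + nth 0 c (nth 0 s j)))) (iota 0 4))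
   (iota 0 6)) (iota 0 6).
Definition checkb : bool :=
  all (fun s => ncdev s || all (fun c => cdev s c) (tuples 3 4)) (tuples 6 3).
Lemma check : checkb = true.
Proof. vm_cast_no_check (erefl true). Qed.
Definition trib : bool :=
  all (fun p => all (fun q => all (fun r =>
  (lev p r <= maxn (lev p q) (lev q r)) && (lev p q == lev q p) && (lev p p == 0))
  (iota 0 10)) (iota 0 10)) (iota 0 10).
Lemma tri : trib = true.
Proof. vm_cast_no_check (erefl true). Qed.

Lemma mem_tuples n m s : size s = n -> all (fun x => x < m) s -> s \in tuples n m.
Proof.
elim: s n => [|x s IH] [|n] //= [Hs] /andP[Hx Ha].
apply: (allpairs_f (fun x t => x :: t)); first by rewrite mem_iota.
exact: IH.
Qed.

Lemma tri_ok p q r : p < 10 -> q < 10 -> r < 10 ->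
  [&& lev p r <= maxn (lev p q) (lev q r), lev p q == lev q p & lev p p == 0].
Proof.
move=> hp hq hr; have := tri; rewrite /trib => /allP/(_ p).
rewrite mem_iota hp => /(_ isT)/allP/(_ q); rewrite mem_iota hq => /(_ isT)/allP/(_ r).
by rewrite mem_iota hr => /(_ isT)/andP[/andP[-> ->] ->].
Qed.

Local Open Scope ring_scope.

Section Main.
Variables (R : realType) (alpha beta : R).
Hypotheses (Ha : 1 <= alpha) (Hb : 1 <= beta).

Definition L : R := alpha + beta.
Lemma L_ge1 : 1 <= L. Proof using Ha Hb. rewrite /L; apply: le_trans Ha _; by rewrite lerDl (le_trans ler01 Hb). Qed.
Lemma L_gt0 : 0 < L. Proof using Ha Hb. exact: lt_le_trans ltr01 L_ge1. Qed.
Lemma alpha_lt : alpha < L. Proof using Hb. by rewrite /L ltrDl (lt_le_trans ltr01 Hb). Qed.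
Lemma beta_lt : beta < L. Proof using Ha. by rewrite /L ltrDr (lt_le_trans ltr01 Ha). Qed.

Definition pw (n : nat) : R := if n is n'.+1 then L ^+ n' else 0.

Lemma pw_ge0 n : 0 <= pw n.
Proof. case: n => [|n] //=; apply: exprn_ge0; exact: ltW L_gt0. Qed.

Lemma pw_mono {m n} : (m <= n)%N -> pw m <= pw n.
Proof.
case: m => [|m] /=; first by move=> _; apply: pw_ge0.
case: n => [|n] //= H; apply: ler_weXn2l => //; exact: L_ge1.
Qed.

Lemma pw_lt c m n : 1 <= c -> c < L -> (m < n)%N -> c * pw m < pw n.
Proof.
move=> H1 H2; case: n => [|n] //=; case: m => [|m] /= Hmn.
  by rewrite mulr0; apply: exprn_gt0; exact: L_gt0.
apply: (@lt_le_trans _ _ (L ^+ m.+1)).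
  rewrite exprS ltr_pM2r //; apply: exprn_gt0; exact: L_gt0.
by apply: ler_weXn2l => //; exact: L_ge1.
Qed.

Definition pt (p : 'I_6 + 'I_4) : nat := match p with inl i => i | inr x => 6 + x end.
Lemma pt_lt p : (pt p < 10)%N.
Proof. case: p => [[i hi]|[x hx]] /=; first exact: leq_trans hi _. by rewrite -[10%N]/(6+4)%N ltn_add2l. Qed.

Definition dd (p q : 'I_6 + 'I_4) : R := pw (lev (pt p) (pt q)).

Lemma dd_pm : pseudometric dd.
Proof.
split.
- move=> x; rewrite /dd; have /and3P[_ _ /eqP ->] := tri_ok _ _ _ (pt_lt x) (pt_lt x) (pt_lt x); done.
- move=> x y; rewrite /dd; have /and3P[_ /eqP -> _] := tri_ok _ _ _ (pt_lt x) (pt_lt y) (pt_lt y); done.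
- move=> x y z; rewrite /dd; have /and3P[H _ _] := tri_ok _ _ _ (pt_lt x) (pt_lt y) (pt_lt z).
  move: H; rewrite leq_max => /orP[] H.
  + apply: (le_trans (pw_mono H)); rewrite lerDl; exact: pw_ge0.
  + apply: (le_trans (pw_mono H)); rewrite lerDr; exact: pw_ge0.
Qed.

End Main.

Lemma mem_iota0 n i : (i \in iota 0 n) = (i < n)%N.
Proof. by rewrite mem_iota. Qed.

Theorem mainTheorem2 (R : realType) (alpha beta : R) :
  1 <= alpha -> 1 <= beta ->
  exists (N M : finType) (k : nat) (d : N + M -> N + M -> R),
    [/\ (0 < #|N|)%N, (0 < #|M|)%N, (0 < k)%N, pseudometric d &
      forall X : clustering N M k,
        ~ (in_core alpha (centroid_loss d) X /\
           in_core beta (noncentroid_loss d) X)].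
Proof.
move=> Ha Hb.
exists 'I_6, 'I_4, 3%N, (@dd R alpha beta).
split; first by rewrite card_ord.
- by rewrite card_ord.
- by [].
- exact: dd_pm.
move=> X [Hc Hn].
pose a := fun i => odflt ord0 [pick t | i \in cl_set X t].
have Hai : forall i, i \in cl_set X (a i).
  move=> i; rewrite /a; case: pickP => [t //|H0].
  by case: (cl_cover X i) => t Ht; rewrite H0 in Ht.
have Huniq : forall i t, i \in cl_set X t -> t = a i.
  move=> i t Ht; apply/eqP; apply: contraT => Hne.
  have := @cl_disj _ _ _ X _ _ Hne; rewrite disjoint_subset => /subsetP/(_ i Ht).
  by rewrite inE Hai.
pose s := mkseq (fun i => nat_of_ord (a (inord i))) 6.
pose c := mkseq (fun t => nat_of_ord (cl_ctr X (inord t))) 3.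
have Hs : s \in tuples 6 3.
  apply: mem_tuples; first by rewrite size_mkseq.
  by apply/allP => x; rewrite /s /mkseq => /mapP[i _ ->].
have Hcm : c \in tuples 3 4.
  apply: mem_tuples; first by rewrite size_mkseq.
  by apply/allP => x; rewrite /c /mkseq => /mapP[i _ ->].
have Hsn : forall i : 'I_6, nth 0%N s i = a i.
  by move=> i; rewrite nth_mkseq // inord_val.
have Hcn : forall t : 'I_3, nth 0%N c t = cl_ctr X t.
  by move=> t; rewrite nth_mkseq // inord_val.
have Hthr : forall i j : 'I_6, i != j ->
    (#|'I_6|%:R / 3%:R <= #|[set i; j]|%:R :> R).
  move=> i j Hij; rewrite card_ord cards2 Hij.
  by rewrite ler_pdivrMr ?ltr0n // -natrM ler_nat.
have := check; rewrite /checkb => /allP/(_ s Hs)/orP[].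
- case/hasP => i; rewrite mem_iota0 => Hi.
  case/hasP => j; rewrite mem_iota0 => Hj.
  case/andP => /andP[Hij /hasP[w1 Hw1 /andP[/eqP Ew1 Lw1]]] /hasP[w2 Hw2 /andP[/eqP Ew2 Lw2]].
  rewrite mem_iota0 in Hw1; rewrite mem_iota0 in Hw2.
  pose i' := Ordinal Hi; pose j' := Ordinal Hj.
  pose w1' := Ordinal Hw1; pose w2' := Ordinal Hw2.
  have Hij' : i' != j' by [].
  apply: Hn; exists [set i'; j'], ord0; split; first exact: Hthr.
  have key : forall (u v w : 'I_6), (lev u v < lev u w)%N -> a w = a u ->
      beta * noncentroid_loss (@dd R alpha beta) u [set u; v] ord0 <
      noncentroid_loss (@dd R alpha beta) u (cl_set X (a u)) (cl_ctr X (a u)).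
    move=> u v w Luw Ew; rewrite /noncentroid_loss.
    apply: (@le_lt_trans _ _ (beta * dd R alpha beta (inl u) (inl v))).
      rewrite ler_pM2l ?(lt_le_trans ltr01 Hb) //.
      apply: bigmax_le => [|m]; first exact: pw_ge0.
      rewrite !inE => /orP[] /eqP -> //.
      have hu : (u < 10)%N := leq_trans (ltn_ord u) (isT : (6 <= 10)%N).
      rewrite /dd /=; have /and3P[_ _ /eqP ->] := tri_ok u u u hu hu hu.
      exact: pw_ge0.
    apply: (@lt_le_trans _ _ (dd R alpha beta (inl u) (inl w))).
      rewrite /dd /=; apply: pw_lt => //; exact: beta_lt.
    apply: (le_bigmax_cond _ (j := w) (P := fun m => m \in cl_set X (a u))).
    by rewrite -Ew.
  move=> k; rewrite !inE => /orP[] /eqP -> t /Huniq ->.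
  + apply: (key _ _ w1') => //; apply: val_inj; rewrite /= -!Hsn; exact: Ew1.
  + rewrite setUC; apply: (key _ _ w2') => //; apply: val_inj; rewrite /= -!Hsn; exact: Ew2.
- move=> /allP/(_ c Hcm).
  case/hasP => i; rewrite mem_iota0 => Hi.
  case/hasP => j; rewrite mem_iota0 => Hj.
  case/andP => Hij /hasP[y Hy /andP[L1 L2]].
  rewrite mem_iota0 in Hy.
  pose i' := Ordinal Hi; pose j' := Ordinal Hj; pose y' := Ordinal Hy.
  have Hij' : i' != j' by [].
  apply: Hc; exists [set i'; j'], y'; split; first exact: Hthr.
  have key : forall (u : 'I_6), (lev u (6 + y') < lev u (6 + cl_ctr X (a u)))%N ->
      alpha * centroid_loss (@dd R alpha beta) u [set i'; j'] y' <
      centroid_loss (@dd R alpha beta) u (cl_set X (a u)) (cl_ctr X (a u)).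
    move=> u Lu; rewrite /centroid_loss /dd /=; apply: pw_lt => //; exact: alpha_lt.
  move=> k; rewrite !inE => /orP[] /eqP -> t /Huniq ->; apply: key.
  + by move: L1; rewrite (Hsn i') (Hcn (a i')).
  + by move: L2; rewrite (Hsn j') (Hcn (a j')).
Qed.
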